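(* Let $p$ be an odd prime. Then $$\prod_{\substack{i,j=1\\ p\nmid i^2-j^2}}^{(p-1)/2}(i^2-j^2)\equiv-\left(\frac{2}{p}\right)\pmod p.$$
   Context: $\left(\frac{\cdot}{p}\right)$ denotes the Legendre symbol. *)

(* Defs.v *)
From HB Require Import structures.
From mathcomp Require Import all_boot all_order all_algebra.
Set Implicit Arguments. Unset Strict Implicit. Unset Printing Implicit Defensive.
Import Order.TTheory GRing.Theory Num.Theory.
Local Open Scope ring_scope.

Definition legendre (a : int) (p : nat) : int :=
  if (p%:Z %| a)%Z then 0
  else if [exists x : 'I_p, (p%:Z %| (x%:Z) ^+ 2 - a)%Z] then 1 else -1.

(* Main.v *)
Require Import Defs.
From HB Require Import structures.
From mathcomp Require Import all_boot all_order all_algebra.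
Import Order.TTheory GRing.Theory Num.Theory.
Local Open Scope ring_scope.
From mathcomp Require Import all_field zify.
Set Warnings "-all".

Lemma fermatF (p : nat) (hp : prime p) (x : 'F_p) : x != 0 -> x ^+ p.-1 = 1.
Proof.
move=> nz; have := expf_card x; rewrite card_Fp // => h.
have h2 : x ^+ p.-1.+1 = x by rewrite prednK ?prime_gt0.
move: h2; rewrite exprS => {}h.
by apply: (mulfI nz); rewrite mulr1 h.
Qed.

Lemma natF0 (p : nat) (hp : prime p) (m : nat) : ((m%:R : 'F_p) == 0) = (p %| m)%N.
Proof. by rewrite (dvdn_pcharf (pchar_Fp hp)). Qed.

Lemma natF_inj (p : nat) (hp : prime p) (i j : nat) :
  (i < p)%N -> (j < p)%N -> (i%:R : 'F_p) = j%:R -> i = j.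
Proof.
wlog le : i j / (i <= j)%N.
  move=> H hi hj e; case: (leqP i j) => [l|l]; first exact: H.
  by apply/esym/H => //; exact: ltnW.
move=> hi hj e.
have : (p %| j - i)%N by rewrite -natF0 // natrB // e subrr.
rewrite /dvdn modn_small; last by apply: leq_ltn_trans (leq_subr _ _) hj.
by rewrite subn_eq0 => h; apply/eqP; rewrite eqn_leq le h.
Qed.

Lemma natF_neq0 (p : nat) (hp : prime p) (j : nat) : (0 < j < p)%N -> (j%:R : 'F_p) != 0.
Proof. by move=> /andP[h1 h2]; rewrite natF0 // gtnNdvd. Qed.

Lemma aF_inj (p : nat) (hp : prime p) (n : nat) (hn : p = (n.*2).+1) (i j : nat) :
  (1 <= i <= n)%N -> (1 <= j <= n)%N -> (i%:R : 'F_p) ^+ 2 = (j%:R) ^+ 2 -> i = j.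
Proof.
move=> hi hj /eqP; rewrite -subr_eq0 subr_sqr mulf_eq0 => /orP[h|h].
  apply: (@natF_inj p hp i j); [lia|lia|]; by apply/eqP; rewrite -subr_eq0.
by move: h; rewrite -natrD natF0 // => /dvdn_leq; lia.
Qed.

Lemma aF_root (p : nat) (hp : prime p) (n : nat) (hn : p = (n.*2).+1) (j : nat) :
  (1 <= j <= n)%N -> ((j%:R : 'F_p) ^+ 2) ^+ n = 1.
Proof.
move=> hj; rewrite -exprM mul2n.
have -> : n.*2 = p.-1 by rewrite hn.
by apply: fermatF => //; apply: natF_neq0 => //; lia.
Qed.

Lemma PX (p : nat) (hp : prime p) (n : nat) (hn : p = (n.*2).+1) (n0 : (0 < n)%N) :
  \prod_(1 <= j < n.+1) ('X - ((j%:R : 'F_p) ^+ 2)%:P) = 'X^n - 1.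
Proof.
set rs := [seq (j%:R : 'F_p) ^+ 2 | j <- index_iota 1 n.+1].
have -> : \prod_(1 <= j < n.+1) ('X - ((j%:R : 'F_p) ^+ 2)%:P)
   = \prod_(z <- rs) ('X - z%:P) by rewrite big_map.
have hall : all (root ('X^n - 1)) rs.
  apply/allP => z /mapP [j]; rewrite mem_index_iota => hj ->.
  by rewrite rootE !hornerE (@aF_root p hp n hn j) ?subrr //.
have huniq : uniq_roots rs.
  rewrite uniq_rootsE map_inj_in_uniq ?iota_uniq //.
  move=> i j; rewrite !mem_index_iota => hi hj; apply: (@aF_inj p hp n hn i j); lia.
have hs : size ('X^n - 1 : {poly 'F_p}) = (size rs).+1.
  by rewrite size_map size_iota subn1 -polyC1 size_XnsubC.
rewrite [in RHS](all_roots_prod_XsubC hs hall huniq).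
have lc : lead_coef ('X^n - 1 : {poly 'F_p}) = 1.
  by rewrite -polyC1; apply/monicP/monicXnsubC.
by rewrite lc scale1r.
Qed.

Lemma rowprod (p : nat) (hp : prime p) (n : nat) (hn : p = (n.*2).+1) (n0 : (0 < n)%N)
  (i : nat) (hi : (1 <= i <= n)%N) :
  \prod_(1 <= j < n.+1 | j != i) ((i%:R : 'F_p) ^+ 2 - (j%:R) ^+ 2)
  = ((i%:R : 'F_p) ^+ 2)^-1 *+ n.
Proof.
set a := (i%:R : 'F_p) ^+ 2.
have an : a ^+ n = 1 := @aF_root p hp n hn i hi.
have a0 : a != 0 by rewrite expf_neq0 // natF_neq0 //; lia.
have E : ('X - a%:P) * \prod_(1 <= j < n.+1 | j != i) ('X - ((j%:R : 'F_p) ^+ 2)%:P)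
   = ('X - a%:P) * \sum_(k < n) 'X ^+ (n.-1 - k) * (a%:P) ^+ k.
  have pX : forall b : 'F_p, (b%:P) ^+ n = (b ^+ n)%:P by move=> b; rewrite polyC_exp.
  rewrite -subrXX pX an polyC1 -(@PX p hp n hn n0).
  by rewrite (bigD1_seq i) ?mem_index_iota ?iota_uniq //; lia.
have X0 : ('X - a%:P) != 0 by rewrite polyXsubC_eq0.
have E2 := mulfI X0 E.
have := congr1 (fun q => q.[a]) E2; rewrite /= horner_prod horner_sum.
rewrite (eq_bigr (fun j => a - (j%:R : 'F_p) ^+ 2)); last by move=> j _; rewrite hornerXsubC.
move=> ->.
rewrite (eq_bigr (fun _ => a ^+ n.-1)); last first.
  move=> k _; rewrite hornerM hornerXn -polyC_exp hornerC -exprD subnK //.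
  by have := ltn_ord k; lia.
rewrite sumr_const card_ord; congr (_ *+ _).
apply: (mulfI a0); rewrite mulfV // -exprS prednK //.
Qed.

Lemma totalF (p : nat) (hp : prime p) (n : nat) (hn : p = (n.*2).+1) (n0 : (0 < n)%N) :
  \prod_(1 <= i < n.+1) \prod_(1 <= j < n.+1 | j != i)
     ((i%:R : 'F_p) ^+ 2 - (j%:R) ^+ 2) = - (2%:R : 'F_p) ^+ n.
Proof.
rewrite (eq_big_nat _ _ (F2 := fun i => (n%:R : 'F_p) * ((i%:R : 'F_p) ^+ 2)^-1)); last first.
  by move=> i hi; rewrite (@rowprod p hp n hn n0 i) ?mulr_natl //; lia.
rewrite big_split /= prodr_const_nat subn1 /= prodfV.
set A := \prod_(1 <= i < n.+1) (i%:R : 'F_p) ^+ 2.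
have hP0 : \prod_(1 <= j < n.+1) (- (j%:R : 'F_p) ^+ 2) = -1.
  have := congr1 (fun q => q.[0]) (@PX p hp n hn n0).
  rewrite /= horner_prod !hornerE expr0n eqn0Ngt n0 /= sub0r => <-.
  by apply: eq_bigr => j _; rewrite hornerXsubC sub0r.
have hA : (-1) ^+ n * A = -1.
  rewrite -[RHS]hP0 /A.
  have -> : ((-1 : 'F_p) ^+ n) = \prod_(1 <= j < n.+1) (-1 : 'F_p).
    by rewrite prodr_const_nat subn1.
  by rewrite -big_split /=; apply: eq_bigr => j _; rewrite mulN1r.
have A0 : A != 0.
  by apply/eqP => A0; move: hA; rewrite A0 mulr0 => /eqP; rewrite eq_sym oppr_eq0 oner_eq0.
have Ai : A^-1 = - (-1) ^+ n.
  apply: (mulfI A0); rewrite mulfV // mulrN mulrC hA opprK //.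
rewrite Ai mulrN -exprMn mulrN1; congr (- _).
have h2 : (2%:R : 'F_p) != 0 by rewrite natF_neq0 //; lia.
have h2n : (2%:R : 'F_p) ^+ n * 2%:R ^+ n = 1.
  have -> : 2%:R ^+ n * 2%:R ^+ n = (2%:R : 'F_p) ^+ p.-1 by rewrite -exprD addnn hn.
  exact: fermatF.
have hn2 : (- (n%:R : 'F_p)) * 2%:R = 1.
  have : (((n.*2).+1)%:R : 'F_p) = 0 by apply/eqP; rewrite natF0 // -hn.
  rewrite -[(n.*2).+1]addn1 natrD -[n.*2]muln2 natrM => /eqP; rewrite addr_eq0 => /eqP h.
  by rewrite mulNr h opprK.
apply: (mulIf (expf_neq0 n h2)); rewrite h2n -exprMn hn2 expr1n //.
Qed.



Lemma intF (p : nat) (hp : prime p) (z : int) : (p%:Z %| z)%Z = ((z%:~R : 'F_p) == 0).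
Proof. by rewrite (dvdz_pcharf (pchar_Fp hp)). Qed.

Lemma legF (p : nat) (hp : prime p) (n : nat) (hn : p = (n.*2).+1) (n0 : (0 < n)%N) :
  ((legendre 2 p)%:~R : 'F_p) = (2%:R : 'F_p) ^+ n.
Proof.
have h2 : (2%:R : 'F_p) != 0 by rewrite natF_neq0 //; lia.
have hsq : ((2%:R : 'F_p) ^+ n) ^+ 2 = 1.
  by rewrite -exprM muln2 (_ : n.*2 = p.-1) ?hn // fermatF // -hn.
rewrite /legendre intF // (_ : ((2 : int)%:~R : 'F_p) = 2%:R) // (negbTE h2).
case: ifP => [/existsP [x] | /negbT /existsPn nex].
  rewrite intF // rmorphB rmorphXn /= subr_eq0 => /eqP hx.
  have hx' : ((x : nat)%:R : 'F_p) ^+ 2 = 2%:R by exact: hx.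
  have x0 : ((x : nat)%:R : 'F_p) != 0.
    by apply: contraNneq h2 => x0; rewrite -hx' x0 expr0n.
  by rewrite -hx' -exprM mul2n (_ : n.*2 = p.-1) ?hn // fermatF // -hn.
move/eqP: hsq; rewrite sqrf_eq1 => /orP [/eqP e1 | /eqP ->]; last by [].
exfalso.
have : root ('X^n - 1) (2%:R : 'F_p) by rewrite rootE !hornerE e1 subrr.
rewrite -(@PX p hp n hn n0) rootE horner_prod.
apply/negP; rewrite prodf_seq_neq0.
apply/allP => j; rewrite mem_index_iota => hj /=; rewrite hornerXsubC subr_eq0.
apply/negP => /eqP hj2.
have jp : (j < p)%N by lia.
move: (nex (Ordinal jp)); rewrite intF // rmorphB rmorphXn /= subr_eq0.
by move/negP; apply; apply/eqP; exact: (esym hj2).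
Qed.


Theorem mainTheorem10 (p : nat) (hp : prime p) (hodd : odd p) :
  ((\prod_(1 <= i < (p.-1./2).+1)
      \prod_(1 <= j < (p.-1./2).+1 | ~~ (p%:Z %| (i%:Z) ^+ 2 - (j%:Z) ^+ 2)%Z)
        ((i%:Z) ^+ 2 - (j%:Z) ^+ 2))
   = - legendre 2 p %[mod p])%Z.
Proof.
set n := p.-1./2.
have e : (p./2).*2.+1 = p by rewrite -[RHS]odd_double_half hodd add1n.
have hn : p = (n.*2).+1.
  by rewrite /n -[in p.-1]e /= doubleK e.
have n0 : (0 < n)%N by have := prime_gt1 hp; lia.
have HZ : forall Z, Z = (\prod_(1 <= i < n.+1)
      \prod_(1 <= j < n.+1 | ~~ (p%:Z %| (i%:Z) ^+ 2 - (j%:Z) ^+ 2)%Z)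
        ((i%:Z) ^+ 2 - (j%:Z) ^+ 2)) -> (Z%:~R : 'F_p) = - (2%:R : 'F_p) ^+ n.
  move=> Z ->; rewrite rmorph_prod -(@totalF p hp n hn n0).
  apply: eq_big_nat => i hi; rewrite rmorph_prod.
  rewrite big_nat_cond [RHS]big_nat_cond; apply: eq_big => [j|j _].
    case hj: (1 <= j < n.+1)%N => //=.
    rewrite intF // rmorphB !rmorphXn /= subr_eq0.
    congr (~~ _); apply/eqP/eqP => [h|->]; last by [].
    by apply/esym/(@aF_inj p hp n hn i j) => //; lia.
  by rewrite rmorphB !rmorphXn.
apply/eqP; rewrite eqz_mod_dvd intF // rmorphB rmorphN /= (HZ _ erefl) (@legF p hp n hn n0).
by rewrite opprK addrC subrr.
Qed.
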